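(* Let $\gamma \in (\tfrac12, 1)$, $\mu_1,\mu_2 \in \mathbb{R}$, $\sigma_1,\sigma_2>0$, $\beta>0$, $\rho \in (\tfrac12,1)$ and $\Delta p \in \mathbb{R}$. Let $(X,Y)$ be a random pair with $P(Y=+1)=\gamma$, $P(Y=-1)=1-\gamma$, and conditional distributions $X \mid Y=-1 \sim \mathcal{N}(\mu_1,\sigma_1^2)$, $X \mid Y=+1 \sim \mathcal{N}(\mu_2,\sigma_2^2)$. Define the confidence score $$s(x) = \frac{1}{1+\exp\!\left(-\beta\left((x-\Delta p) - \frac{\mu_1+\mu_2}{2}\right)\right)},$$ and the pseudo-label $Y_{psl}$ by: $Y_{psl}=+1$ if $s(X)>\rho$, $Y_{psl}=-1$ if $s(X)<1-\rho$, and $Y_{psl}=0$ if $1-\rho \le s(X) \le \rho$. Then, with $\Phi$ the cumulative distribution function of the standard normal distribution, $$P(Y_{psl}=1) = \gamma\, \Phi\!\left(\frac{\frac{\mu_2-\mu_1}{2} - \frac{1}{\beta}\log\frac{\rho}{1-\rho} - \Delta p}{\sigma_2}\right) + (1-\gamma)\, \Phi\!\left(\frac{\frac{\mu_1-\mu_2}{2} - \frac{1}{\beta}\log\frac{\rho}{1-\rho} - \Delta p}{\sigma_1}\right),$$ $$P(Y_{psl}=-1) = (1-\gamma)\, \Phi\!\left(\frac{\frac{\mu_2-\mu_1}{2} - \frac{1}{\beta}\log\frac{\rho}{1-\rho} + \Delta p}{\sigma_1}\right) + \gamma\, \Phi\!\left(\frac{\frac{\mu_1-\mu_2}{2} - \frac{1}{\beta}\log\frac{\rho}{1-\rho}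 + \Delta p}{\sigma_2}\right),$$ $$P(Y_{psl}=0) = 1 - P(Y_{psl}=1) - P(Y_{psl}=-1).$$
   Context: This models pseudo-labeling in a binary semi-supervised classification problem: $\gamma$ is the proportion of the positive class in the unlabeled data, $\Delta p$ is a logit-adjustment amount, $\beta$ reflects the sharpness (confidence) of the classifier, and $\rho$ is a fixed confidence threshold; a pseudo-label of $0$ means the sample is masked (no pseudo-label assigned). *)

(* Defs.v *)
From HB Require Import structures.
From mathcomp Require Import all_boot all_order all_algebra.
From mathcomp Require Import all_classical all_reals all_analysis.
From mathcomp Require Import normal_distribution.
Set Implicit Arguments. Unset Strict Implicit. Unset Printing Implicit Defensive.
Import Order.TTheory GRing.Theory Num.Theory.
Local Open Scope classical_set_scope.
Local Open Scope ring_scope.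

Definition Phi {R : realType} (x : R) : R :=
  fine (normal_prob 0 1 `]-oo, x]).

(* Conditional law of X given Y = y is mu (for a discrete Y):
   P(X \in A, Y = y) = P(Y = y) * mu(A) for every Borel set A. *)
Definition cond_law {d : measure_display} {T : measurableType d} {R : realType}
  (P : probability T R) (X Y : T -> R) (y : R) (mu : set R -> \bar R) : Prop :=
  forall A : set R, measurable A ->
    P (X @^-1` A `&` Y @^-1` [set y]) = (P (Y @^-1` [set y]) * mu A)%E.

Definition score {R : realType} (beta dp mu1 mu2 : R) (x : R) : R :=
  1 / (1 + expR (- (beta * ((x - dp) - (mu1 + mu2) / 2)))).

Definition pseudo_label {R : realType} (beta dp mu1 mu2 rho : R) (x : R) : R :=
  let s := score beta dp mu1 mu2 x in
  if rho < s then 1 else if s < 1 - rho then -1 else 0.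

(* Main.v *)
Require Import Defs.
From HB Require Import structures.
From mathcomp Require Import all_boot all_order all_algebra.
From mathcomp Require Import all_classical all_reals all_analysis.
From mathcomp Require Import normal_distribution.
From mathcomp Require Import measurable_realfun.
From mathcomp Require Import ring lra.
Import Order.TTheory GRing.Theory Num.Theory.
Local Open Scope classical_set_scope.
Local Open Scope ring_scope.

Section S0.
Context {R : realType}.
Notation mu := (@lebesgue_measure R).
Lemma affD (s m x : R) : is_derive x 1 (fun y : R => s * y + m) s.
Proof. by apply: is_derive_eq; rewrite addr0 scaler1. Qed.
Lemma affD1 (s m : R) : (fun y : R => s * y + m)^`()%classic = cst s.
Proof. by apply/funext => x; have := affD s m x; rewrite derive1E => H; rewrite derive_val. Qed.

Lemma pdf_aff (m s x : R) : 0 < s ->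
  normal_pdf m s (s * x + m) * s = normal_pdf 0 1 x.
Proof.
move=> s0; rewrite !normal_pdfE ?gt_eqF ?oner_eq0 //=.
rewrite /normal_peak /normal_fun addrK subr0 expr1n mul1r.
have sn : s != 0 by rewrite gt_eqF.
have -> : - (s * x) ^+ 2 / (s ^+ 2 *+ 2) = - x ^+ 2 / 2.
  rewrite -[s ^+ 2 *+ 2]mulr_natr exprMn invfM mulNr [in RHS]mulNr; congr (- _).
  by rewrite mulrACA divff ?mul1r // sqrf_eq0.
have -> : Num.sqrt (s ^+ 2 * pi *+ 2) = s * Num.sqrt (pi *+ 2).
  by rewrite -mulrnAr sqrtrM ?sqr_ge0 // sqrtr_sqr gtr0_norm.
rewrite invfM (mulrC s^-1) -!mulrA; congr (_ * _).
by rewrite mulrCA mulVf // mulr1.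
Qed.

Lemma np_left (m s b : R) : 0 < s ->
  normal_prob m s `]-oo, s * b + m] = normal_prob 0 1 `]-oo, b].
Proof.
move=> s0.
rewrite /normal_prob.
rewrite (@increasing_ge0_integration_by_substitutionNy _ (fun y => s * y + m) _ b); last first.
- by move=> x _; exact: normal_pdf_ge0.
- have hc := @continuous_normal_pdf R m s (lt0r_neq0 s0). apply/continuous_within_itvNycP; split; [by move=> x _; exact: hc | apply: cvg_at_left_filter; exact: hc].
- apply/cvgrNyPle => A; near=> x.
  rewrite -lerBrDr -ler_pdivlMl //.
- split; last first.
    apply: cvg_at_left_filter.
    apply: cvgD; last exact: cvg_cst.
    apply: cvgMr; exact: cvg_id.
  by move=> x _; apply: ex_derive; exact: affD.
- rewrite affD1; exact: cvg_cst.
- rewrite affD1; exact: is_cvg_cst.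
- by rewrite affD1 => x _; exact: cvg_cst.
- by move=> x y _ _ xy; rewrite ltrD2r ltr_pM2l.
apply: eq_integral => x _; congr EFin.
by rewrite !fctE affD1 /= pdf_aff.
Unshelve. all: end_near. Qed.

Lemma np_right (m s a : R) : 0 < s ->
  normal_prob m s `[s * a + m, +oo[ = normal_prob 0 1 `[a, +oo[.
Proof.
move=> s0.
rewrite /normal_prob.
rewrite (@increasing_ge0_integration_by_substitutiony _ (fun y => s * y + m) _ a); last first.
- by move=> x _; exact: normal_pdf_ge0.
- have hc := @continuous_normal_pdf R m s (lt0r_neq0 s0). apply/continuous_within_itvcyP; split; [by move=> x _; exact: hc | apply: cvg_at_right_filter; exact: hc].
- apply/cvgryPge => A; near=> x.
  rewrite -lerBlDr -ler_pdivrMl //.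
- split; last first.
    apply: cvg_at_right_filter.
    apply: cvgD; last exact: cvg_cst.
    apply: cvgMr; exact: cvg_id.
  by move=> x _; apply: ex_derive; exact: affD.
- rewrite affD1; exact: is_cvg_cst.
- rewrite affD1; exact: is_cvg_cst.
- by rewrite affD1 => x _; exact: cvg_cst.
- by move=> x y _ _ xy; rewrite ltrD2r ltr_pM2l.
apply: eq_integral => x _; congr EFin.
by rewrite !fctE affD1 /= pdf_aff.
Unshelve. all: end_near. Qed.

Lemma np_sym (a : R) :
  normal_prob 0 1 `[a, +oo[ = normal_prob 0 1 `]-oo, - a].
Proof.
rewrite /normal_prob ge0_integration_by_substitutionNy.
- apply: eq_integral => x _; congr EFin.
  by rewrite /= !normal_pdfE ?oner_eq0 //= /normal_fun !subr0 sqrrN.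
- have hc := @continuous_normal_pdf R 0 1 (oner_neq0 R). apply/continuous_within_itvNycP; split; [by move=> x _; exact: hc | apply: cvg_at_left_filter; exact: hc].
- by move=> x _; exact: normal_pdf_ge0.
Qed.

Lemma mnpdf (m s : R) (A : set R) : measurable_fun A (fun x => (normal_pdf m s x)%:E).
Proof.
apply/measurable_EFinP; exact: measurable_funS (measurable_normal_pdf m s).
Qed.

Lemma np_oc (m s c : R) : normal_prob m s `]c, +oo[ = normal_prob m s `[c, +oo[.
Proof. exact: integral_itv_obnd_cbnd (mnpdf m s _). Qed.

Lemma np_co (m s c : R) : normal_prob m s `]-oo, c[ = normal_prob m s `]-oo, c].
Proof. exact: integral_itv_bndo_bndc (mnpdf m s _). Qed.

Lemma np_gt (m s c : R) : 0 < s ->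
  normal_prob m s `]c, +oo[ = normal_prob 0 1 `]-oo, (m - c) / s].
Proof.
move=> s0; rewrite np_oc.
rewrite (_ : (m - c) / s = - ((c - m) / s)); last by rewrite -mulNr opprB.
rewrite -np_sym -(np_right m s) //.
by rewrite mulrCA divff ?gt_eqF // mulr1 subrK.
Qed.

Lemma np_lt (m s c : R) : 0 < s ->
  normal_prob m s `]-oo, c[ = normal_prob 0 1 `]-oo, (c - m) / s].
Proof.
move=> s0; rewrite np_co -(np_left m s) //.
by rewrite mulrCA divff ?gt_eqF // mulr1 subrK.
Qed.
End S0.

Lemma psl_vals {R : realType} (beta dp mu1 mu2 rho x : R) :
  (pseudo_label beta dp mu1 mu2 rho x = 0) <->
  ~ (pseudo_label beta dp mu1 mu2 rho x = 1 \/ pseudo_label beta dp mu1 mu2 rho x = -1).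
Proof.
rewrite /pseudo_label; case: ifP => _; [|case: ifP => _]; split => h.
- lra.
- by exfalso; apply: h; left.
- lra.
- by exfalso; apply: h; right.
- by case => h'; lra.
- by [].
Qed.

Section T.
Context {R : realType}.

Definition sig (y : R) : R := 1 / (1 + expR (- y)).

Lemma sig_lt (y z : R) : (sig y < sig z) = (y < z).
Proof.
rewrite /sig !div1r ltf_pV2 ?posrE ?addr_gt0 ?expR_gt0 //.
by rewrite ltrD2l ltr_expR ltrN2.
Qed.

Lemma sig_u (rho : R) : 0 < rho < 1 -> sig (ln (rho / (1 - rho))) = rho.
Proof.
case/andP => r0 r1.
have h : 0 < rho / (1 - rho) by rewrite divr_gt0 // subr_gt0.
rewrite /sig expRN lnK ?posrE //.
have : 1 - rho != 0 by rewrite gt_eqF // subr_gt0.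
have : rho != 0 by rewrite gt_eqF.
move=> a b; field; rewrite a b /=.
by rewrite (_ : rho + (1 - rho) = 1) ?oner_neq0 //; ring.
Qed.

Lemma sig_Nu (rho : R) : 0 < rho < 1 -> sig (- ln (rho / (1 - rho))) = 1 - rho.
Proof.
case/andP => r0 r1.
have h : 0 < rho / (1 - rho) by rewrite divr_gt0 // subr_gt0.
rewrite /sig opprK lnK ?posrE //.
have : 1 - rho != 0 by rewrite gt_eqF // subr_gt0.
have : rho != 0 by rewrite gt_eqF.
move=> a b; field; rewrite b /=.
by rewrite (_ : 1 - rho + rho = 1) ?oner_neq0 //; ring.
Qed.

Lemma score_sig (beta dp mu1 mu2 x : R) :
  score beta dp mu1 mu2 x = sig (beta * ((x - dp) - (mu1 + mu2) / 2)).
Proof. by []. Qed.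


Lemma psl_1 (beta dp mu1 mu2 rho x : R) : 0 < beta -> 1 / 2 < rho -> rho < 1 ->
  (pseudo_label beta dp mu1 mu2 rho x = 1) <->
  (dp + (mu1 + mu2) / 2 + ln (rho / (1 - rho)) / beta < x).
Proof.
move=> b0 r2 r1.
have r0 : 0 < rho < 1 by apply/andP; split => //; lra.
have E : (rho < score beta dp mu1 mu2 x) =
  (dp + (mu1 + mu2) / 2 + ln (rho / (1 - rho)) / beta < x).
  rewrite score_sig -{1}(sig_u rho r0) sig_lt [beta * _]mulrC -ltr_pdivrMr //.
  by set L := _ / beta; apply/idP/idP => ?; lra.
rewrite /pseudo_label -/(score _ _ _ _ _) -E.
set s := score _ _ _ _ _.
by case: (ltrP rho s) => h1; case: (ltrP s (1 - rho)) => h2; split => h; lra.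
Qed.

Lemma psl_m1 (beta dp mu1 mu2 rho x : R) : 0 < beta -> 1 / 2 < rho -> rho < 1 ->
  (pseudo_label beta dp mu1 mu2 rho x = -1) <->
  (x < dp + (mu1 + mu2) / 2 - ln (rho / (1 - rho)) / beta).
Proof.
move=> b0 r2 r1.
have r0 : 0 < rho < 1 by apply/andP; split => //; lra.
have E : (score beta dp mu1 mu2 x < 1 - rho) =
  (x < dp + (mu1 + mu2) / 2 - ln (rho / (1 - rho)) / beta).
  rewrite score_sig -{1}(sig_Nu rho r0) sig_lt [beta * _]mulrC -ltr_pdivlMr //.
  by rewrite mulNr; set L := _ / beta; apply/idP/idP => ?; lra.
rewrite /pseudo_label -/(score _ _ _ _ _) -E.
set s := score _ _ _ _ _.
by case: (ltrP rho s) => h1; case: (ltrP s (1 - rho)) => h2; split => h; lra.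
Qed.
End T.

Theorem theorem0p1 (d : measure_display) (T : measurableType d) (R : realType)
  (P : probability T R) (X Y : T -> R)
  (gamma mu1 mu2 sigma1 sigma2 beta rho dp : R) :
  1 / 2 < gamma -> gamma < 1 ->
  0 < sigma1 -> 0 < sigma2 -> 0 < beta ->
  1 / 2 < rho -> rho < 1 ->
  measurable_fun setT X -> measurable_fun setT Y ->
  P (Y @^-1` [set 1]) = gamma%:E ->
  P (Y @^-1` [set -1]) = (1 - gamma)%:E ->
  cond_law P X Y (-1) (normal_prob mu1 sigma1) ->
  cond_law P X Y 1 (normal_prob mu2 sigma2) ->
  let L := ln (rho / (1 - rho)) / beta in
  let Ypsl := fun w => pseudo_label beta dp mu1 mu2 rho (X w) in
  [/\ P (Ypsl @^-1` [set 1]) =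
        (gamma * Phi (((mu2 - mu1) / 2 - L - dp) / sigma2)
         + (1 - gamma) * Phi (((mu1 - mu2) / 2 - L - dp) / sigma1))%:E,
      P (Ypsl @^-1` [set -1]) =
        ((1 - gamma) * Phi (((mu2 - mu1) / 2 - L + dp) / sigma1)
         + gamma * Phi (((mu1 - mu2) / 2 - L + dp) / sigma2))%:E
    & P (Ypsl @^-1` [set 0]) =
        (1 - P (Ypsl @^-1` [set 1%R]) - P (Ypsl @^-1` [set (-1)%R]))%E].
Proof.
move=> g2 g1 s1 s2 b0 r2 r1 mX mY PY1 PYm cl1 cl2 L Ypsl.
set c1 := dp + (mu1 + mu2) / 2 + ln (rho / (1 - rho)) / beta.
set c2 := dp + (mu1 + mu2) / 2 - ln (rho / (1 - rho)) / beta.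
have E1 : Ypsl @^-1` [set 1] = X @^-1` `]c1, +oo[.
  apply/seteqP; split => w /=; rewrite in_itv /= andbT.
    by move=> H; exact: (proj1 (psl_1 beta dp mu1 mu2 rho (X w) b0 r2 r1) H).
  by move=> H; exact: (proj2 (psl_1 beta dp mu1 mu2 rho (X w) b0 r2 r1) H).
have E2 : Ypsl @^-1` [set -1] = X @^-1` `]-oo, c2[.
  apply/seteqP; split => w /=; rewrite in_itv /=.
    by move=> H; exact: (proj1 (psl_m1 beta dp mu1 mu2 rho (X w) b0 r2 r1) H).
  by move=> H; exact: (proj2 (psl_m1 beta dp mu1 mu2 rho (X w) b0 r2 r1) H).
have mXp : forall A, measurable A -> measurable (X @^-1` A).
  by move=> A mA; rewrite -[X in measurable X]setTI; exact: mX.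
have mY1 : measurable (Y @^-1` [set 1]).
  by rewrite -[X in measurable X]setTI; exact: mY.
have mYm : measurable (Y @^-1` [set -1]).
  by rewrite -[X in measurable X]setTI; exact: mY.
have dis : Y @^-1` [set 1] `&` Y @^-1` [set -1] = set0.
  by apply/seteqP; split => [w [/= h1 h2]|//]; lra.
have Y0 : P (~` (Y @^-1` [set 1] `|` Y @^-1` [set -1])) = 0%E.
  rewrite probability_setC; last exact: measurableU.
  rewrite measureU //= PY1 PYm -EFinD (addrC gamma) subrK.
  by rewrite subrr.
have spl : forall S, measurable S ->
    P S = (P (S `&` Y @^-1` [set 1%R]) + P (S `&` Y @^-1` [set (-1)%R]))%E.
  move=> S mS.
  rewrite (measureDI P mS (measurableU _ _ mY1 mYm)).
  rewrite [X in (X + _)%E](_ : _ = 0%E) ?add0e; last first.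
    apply: subset_measure0 Y0 => //.
    - by apply: measurableD => //; apply: measurableU.
    - by apply: measurableC; apply: measurableU.
  rewrite setIUr measureU //; try exact: measurableI.
  by rewrite setIACA dis setI0.
have NPhi : forall t : R, normal_prob 0 1 `]-oo, t] = (Phi t)%:E.
  by move=> t; rewrite /Phi fineK // fin_num_measure.
have h1 : P (Ypsl @^-1` [set 1]) =
        (gamma * Phi (((mu2 - mu1) / 2 - L - dp) / sigma2)
         + (1 - gamma) * Phi (((mu1 - mu2) / 2 - L - dp) / sigma1))%:E.
  rewrite E1 spl; last by apply: mXp; exact: measurable_itv.
  rewrite cl2 ?cl1; try exact: measurable_itv.
  rewrite PY1 PYm !np_gt // !NPhi -!EFinM -EFinD.
  by congr (EFin (_ * Phi _ + _ * Phi _)); congr (_ / _); rewrite /c1 /L; lra.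
have h2 : P (Ypsl @^-1` [set -1]) =
        ((1 - gamma) * Phi (((mu2 - mu1) / 2 - L + dp) / sigma1)
         + gamma * Phi (((mu1 - mu2) / 2 - L + dp) / sigma2))%:E.
  rewrite E2 spl; last (apply: mXp; exact: measurable_itv).
  rewrite cl2 ?cl1; try exact: measurable_itv.
  rewrite PY1 PYm !np_lt // !NPhi -!EFinM -EFinD addrC.
  by congr (EFin (_ * Phi _ + _ * Phi _)); congr (_ / _); rewrite /c2 /L; lra.
split => //.
have E0 : Ypsl @^-1` [set 0] = ~` (Ypsl @^-1` [set 1] `|` Ypsl @^-1` [set -1]).
  by apply/seteqP; split => w /=; rewrite /Ypsl => /psl_vals.
rewrite E0 probability_setC; last first.
  by apply: measurableU; [rewrite E1|rewrite E2]; (apply: mXp; exact: measurable_itv).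
rewrite measureU; last first.
- apply/seteqP; split => [w [/= -> ]|//]; lra.
- by rewrite E2; (apply: mXp; exact: measurable_itv).
- by rewrite E1; (apply: mXp; exact: measurable_itv).
rewrite /= h1 h2.
move: (_ * _ + _ * _) (_ * _ + _ * _) => a b.
change ((a%:E + b%:E)%R) with ((a%:E + b%:E)%E).
by rewrite -EFinD -!EFinB; congr EFin; ring.
Qed.
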